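(* Let $Z$ be a convex subset of a real vector space $V$, and let $p:V\to[0,\infty)$ be a seminorm such that $p(x)\leq a$ for all $x\in Z$, for some $a\geq 0$. Then for all $x,y\in Z$, $$p(x-y)\leq 2a\big(1-t_y(x)\big)\leq 2a\big(1-b(y)\big).$$
   Context: The weight function is $t_y(x)=\sup\{0\leq t<1 : \frac{y-tx}{1-t}\in Z\}$ for $x,y\in Z$, and the boundariness of $y\in Z$ is $b(y)=\inf_{x\in Z}t_y(x)$. *)

(* Defs.v *)
From HB Require Import structures.
From mathcomp Require Import all_boot all_order all_algebra.
From mathcomp Require Import all_classical all_reals.
Set Implicit Arguments. Unset Strict Implicit. Unset Printing Implicit Defensive.
Import Order.TTheory GRing.Theory Num.Theory.
Local Open Scope classical_set_scope.
Local Open Scope ring_scope.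

Definition convex_set (R : realType) (V : lmodType R) (Z : set V) : Prop :=
  forall x y, Z x -> Z y -> forall t : R, 0 <= t <= 1 ->
    Z (t *: x + (1 - t) *: y).

Definition seminorm (R : realType) (V : lmodType R) (p : V -> R) : Prop :=
  (forall x, 0 <= p x) /\
  (forall x y, p (x + y) <= p x + p y) /\
  (forall (c : R) x, p (c *: x) = `|c| * p x).

Definition weight (R : realType) (V : lmodType R) (Z : set V) (y x : V) : R :=
  sup [set t : R | 0 <= t < 1 /\ Z ((1 - t)^-1 *: (y - t *: x))].

Definition boundariness (R : realType) (V : lmodType R) (Z : set V) (y : V) : R :=
  inf [set weight Z y x | x in Z].

(* Main.v *)
Require Import Defs.
From HB Require Import structures.
From mathcomp Require Import all_boot all_order all_algebra.
From mathcomp Require Import all_classical all_reals.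
Import Order.TTheory GRing.Theory Num.Theory.
Local Open Scope classical_set_scope.
Local Open Scope ring_scope.

Lemma weight_S0 (R : realType) (V : lmodType R) (Z : set V) (y x : V) :
  Z y -> [set t : R | 0 <= t < 1 /\ Z ((1 - t)^-1 *: (y - t *: x))] 0.
Proof.
move=> Zy; split; first by rewrite lexx ltr01.
by rewrite subr0 invr1 scale1r scale0r subr0.
Qed.

Lemma weight_S_ub (R : realType) (V : lmodType R) (Z : set V) (y x : V) :
  has_ubound [set t : R | 0 <= t < 1 /\ Z ((1 - t)^-1 *: (y - t *: x))].
Proof. by exists 1 => t [/andP[_ /ltW]]. Qed.

Lemma weight_ge0 (R : realType) (V : lmodType R) (Z : set V) (y x : V) :
  Z y -> 0 <= weight Z y x.
Proof.
move=> Zy; have := ub_le_sup (@weight_S_ub R V Z y x) (@weight_S0 R V Z y x Zy); rewrite /weight; exact.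
Qed.

Lemma weight_le1 (R : realType) (V : lmodType R) (Z : set V) (y x : V) :
  Z y -> weight Z y x <= 1.
Proof.
move=> Zy; apply: ge_sup; first by exists 0; exact: (@weight_S0 R V Z y x Zy).
by move=> t [/andP[_ /ltW]].
Qed.

Theorem proposition2 (R : realType) (V : lmodType R) (Z : set V) (p : V -> R)
  (a : R) :
  convex_set Z -> seminorm p -> 0 <= a -> (forall x, Z x -> p x <= a) ->
  forall x y, Z x -> Z y ->
    p (x - y) <= 2 * a * (1 - weight Z y x) /\
    2 * a * (1 - weight Z y x) <= 2 * a * (1 - boundariness Z y).
Proof.
move=> _ [p0 [pD pZ]] a0 pa x y Zx Zy.
have key : forall t, [set t : R | 0 <= t < 1 /\ Z ((1 - t)^-1 *: (y - t *: x))] t ->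
    p (x - y) <= (1 - t) * (2 * a).
  move=> t [/andP[t0 t1] Zz].
  set z := (1 - t)^-1 *: (y - t *: x) in Zz.
  have t1' : 1 - t != 0 by rewrite subr_eq0 eq_sym lt_eqF.
  have -> : x - y = (1 - t) *: (x - z).
    rewrite /z scalerBr scalerA mulfV // scale1r scalerBl scale1r.
    by rewrite opprB addrA subrK.
  rewrite pZ ger0_norm; last by rewrite subr_ge0 ltW.
  apply: ler_wpM2l; first by rewrite subr_ge0 ltW.
  apply: (le_trans (pD _ _)).
  rewrite -scaleN1r pZ normrN normr1 mul1r.
  by rewrite mulr2n mulrDl !mul1r lerD ?pa.
split.
  have h0 := key 0 (@weight_S0 R V Z y x Zy).
  rewrite subr0 mul1r in h0.
  have [aE|ap] := eqVneq a 0.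
    by move: h0; rewrite aE !mulr0 mul0r.
  have a2 : 0 < 2 * a by rewrite mulr_gt0 // lt_neqAle eq_sym ap a0.
  have hw : weight Z y x <= 1 - p (x - y) / (2 * a).
    apply: ge_sup; first by exists 0; exact: (@weight_S0 R V Z y x Zy).
    move=> t /key h.
    rewrite lerBrDl -lerBrDr ler_pdivrMr //.
  have hh : 1 - (1 - p (x - y) / (2 * a)) <= 1 - weight Z y x by rewrite lerD2l lerN2.
  apply: le_trans (ler_wpM2l (ltW a2) hh).
  by rewrite opprB addrCA subrr addr0 mulrC divfK ?lt0r_neq0.
apply: ler_wpM2l; first by rewrite mulr_ge0.
rewrite lerD2l lerN2.
apply: (ge_inf); last by exists x.
exists 0 => _ [x' Zx' <-]; exact: weight_ge0.
Qed.
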